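(* Let $d,n\ge 1$, let $\boldsymbol{a}_1,\ldots,\boldsymbol{a}_n\in\mathbf{R}^d$, let $w_1,\ldots,w_n>0$, fix $\varepsilon>0$ and $0<p<1$. Define $\Phi(\boldsymbol{x})=\sum_{j=1}^n w_j\,(\lVert\boldsymbol{x}-\boldsymbol{a}_j\rVert^2+\varepsilon)^{p/2}$. Let $\boldsymbol{x}^{(0)}\in\mathbf{R}^d$ and define, for $t\ge 0$, $$\mu_j^{(t)}=w_j\,(\lVert\boldsymbol{x}^{(t)}-\boldsymbol{a}_j\rVert^2+\varepsilon)^{p/2-1},\qquad \boldsymbol{x}^{(t+1)}=\frac{\sum_j\mu_j^{(t)}\boldsymbol{a}_j}{\sum_j\mu_j^{(t)}}.$$ Assume that $(\boldsymbol{x}^{(t)})$ converges to a local minimizer $\boldsymbol{x}^\star$ of $\Phi$ and that the Hessian $\Phi''(\boldsymbol{x}^\star)$ is positive definite. Then $(\Phi(\boldsymbol{x}^{(t)}))$ converges linearly to $\Phi(\boldsymbol{x}^\star)$, i.e. there exist $\nu<1$ and $T\ge 0$ such that $\Phi(\boldsymbol{x}^{(t+1)})-\Phi(\boldsymbol{x}^\star)\le\nu\big(\Phi(\boldsymbol{x}^{(t)})-\Phi(\boldsymbol{x}^\star)\big)$ for all $t\ge T$.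
   Context: $\lVert\cdot\rVert$ is the Euclidean norm on $\mathbf{R}^d$; $\Phi''$ denotes the Hessian matrix of the smooth function $\Phi$. *)

(* Defs.v *)
From HB Require Import structures.
From mathcomp Require Import all_boot all_order all_algebra.
From mathcomp Require Import all_classical all_reals all_analysis.
Set Implicit Arguments. Unset Strict Implicit. Unset Printing Implicit Defensive.
Import Order.TTheory GRing.Theory Num.Theory.
Import numFieldNormedType.Exports.
Local Open Scope ring_scope.
Local Open Scope classical_set_scope.

Section Defs.
Variables (R : realType) (d n : nat).

Definition sqnorm (x : 'rV[R]_d) : R := \sum_(i < d) (x ord0 i) ^+ 2.

Definition Phi (a : 'I_n -> 'rV[R]_d) (w : 'I_n -> R) (eps p : R)
  (x : 'rV[R]_d) : R :=
  \sum_(j < n) w j * powR (sqnorm (x - a j) + eps) (p / 2).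

Definition mu (a : 'I_n -> 'rV[R]_d) (w : 'I_n -> R) (eps p : R)
  (x : 'rV[R]_d) (j : 'I_n) : R :=
  w j * powR (sqnorm (x - a j) + eps) (p / 2 - 1).

Definition irls_step (a : 'I_n -> 'rV[R]_d) (w : 'I_n -> R) (eps p : R)
  (x : 'rV[R]_d) : 'rV[R]_d :=
  (\sum_(j < n) mu a w eps p x j)^-1 *: \sum_(j < n) (mu a w eps p x j *: a j).

Definition irls_iter (a : 'I_n -> 'rV[R]_d) (w : 'I_n -> R) (eps p : R)
  (x0 : 'rV[R]_d) (t : nat) : 'rV[R]_d :=
  iter t (irls_step a w eps p) x0.

Definition basis_vec (i : 'I_d) : 'rV[R]_d := delta_mx ord0 i.

Definition hessian (f : 'rV[R]_d -> R) (x : 'rV[R]_d) : 'M[R]_d :=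
  \matrix_(i < d, k < d) 'D_(basis_vec i) ('D_(basis_vec k) f) x.

Definition posdef (M : 'M[R]_d) : Prop :=
  forall v : 'rV[R]_d, v != 0 -> 0 < (v *m M *m v^T) ord0 ord0.

Definition local_minimizer (f : 'rV[R]_d -> R) (xs : 'rV[R]_d) : Prop :=
  \forall y \near xs, f xs <= f y.

End Defs.

(* Main.v *)
Require Import Defs.
From HB Require Import structures.
From mathcomp Require Import all_boot all_order all_algebra.
From mathcomp Require Import all_classical all_reals all_analysis.
From mathcomp Require Import ring lra.
Import Order.TTheory GRing.Theory Num.Theory.
Import numFieldNormedType.Exports.
Local Open Scope ring_scope.
Local Open Scope classical_set_scope.

Module Helpers.
Set Implicit Arguments. Unset Strict Implicit. Unset Printing Implicit Defensive.

Section S.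
Variables (R : realType) (d : nat).
Definition dot (u v : 'rV[R]_d) : R := \sum_(i < d) u ord0 i * v ord0 i.
Lemma sqnormE u : sqnorm u = dot u u.
Proof. by rewrite /sqnorm /dot; apply: eq_bigr => i _; rewrite expr2. Qed.
Lemma dotC u v : dot u v = dot v u.
Proof. by apply: eq_bigr => i _; rewrite mulrC. Qed.
Lemma dotDl u v x : dot (u + v) x = dot u x + dot v x.
Proof. by rewrite /dot -big_split; apply: eq_bigr => i _; rewrite !mxE mulrDl. Qed.
Lemma dotZl (k : R) u x : dot (k *: u) x = k * dot u x.
Proof. by rewrite /dot mulr_sumr; apply: eq_bigr => i _; rewrite !mxE mulrA. Qed.
Lemma dotNl u x : dot (- u) x = - dot u x.
Proof. by rewrite -scaleN1r dotZl mulN1r. Qed.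
Lemma dotBl u v x : dot (u - v) x = dot u x - dot v x.
Proof. by rewrite dotDl dotNl. Qed.
Lemma dot_suml n (F : 'I_n -> 'rV[R]_d) x : dot (\sum_j F j) x = \sum_j dot (F j) x.
Proof.
elim/big_ind2: _ => //; last by move=> *; rewrite dotDl; congr (_ + _).
by rewrite /dot big1 // => i _; rewrite mxE mul0r.
Qed.
Lemma dot_ge0 u : 0 <= dot u u.
Proof. by apply: sumr_ge0 => i _; rewrite -expr2 sqr_ge0. Qed.

Lemma is_derive_ext (f g : R -> R) (x df dg : R) :
  f =1 g -> df = dg -> is_derive x (1:R) f df -> is_derive x (1:R) g dg.
Proof. by move=> /funext <- <-. Qed.

Lemma der_aff (k c s0 : R) : is_derive s0 1 (fun s : R => s * k + c) k.
Proof.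
apply: (is_derive_ext _ _ (is_deriveD (is_deriveZ k (is_derive_id s0 1)) (is_derive_cst c s0 1))).
  by move=> s /=; rewrite mulrC.
by rewrite addr0 /GRing.scale /= mulr1.
Qed.

Lemma der_sum m (h : 'I_m -> R -> R) (dh : 'I_m -> R) (s0 : R) :
  (forall i, is_derive s0 (1:R) (h i) (dh i)) ->
  is_derive s0 (1:R) (fun s => \sum_i h i s) (\sum_i dh i).
Proof. by move=> H; have := is_derive_sum H; rewrite fct_sumE. Qed.

Lemma der_mul (f g : R -> R) (df dg s0 : R) :
  is_derive s0 (1:R) f df -> is_derive s0 (1:R) g dg ->
  is_derive s0 (1:R) (fun s => f s * g s) (f s0 * dg + g s0 * df).
Proof. by move=> H1 H2; have := is_deriveM H1 H2. Qed.

Lemma der_powR (h : R -> R) (dh r s0 : R) : 0 < h s0 ->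
  is_derive s0 (1:R) h dh ->
  is_derive s0 (1:R) (fun s => powR (h s) r) (r * powR (h s0) (r - 1) * dh).
Proof.
move=> hp H; have := is_derive1_comp (@is_derive1_powR R r (h s0) hp) H.
by [].
Qed.

Lemma der_coord (c v : 'rV[R]_d) i (s0 : R) :
  is_derive s0 (1:R) (fun s : R => (s *: v + c) ord0 i) (v ord0 i).
Proof.
apply: (is_derive_ext _ _ (der_aff (v ord0 i) (c ord0 i) s0)) => // s.
by rewrite !mxE mulrC.
Qed.

Lemma der_dot (c v u : 'rV[R]_d) (s0 : R) :
  is_derive s0 (1:R) (fun s : R => dot (s *: v + c) u) (dot v u).
Proof.
apply: (is_derive_ext _ _ (der_aff (dot v u) (dot c u) s0)) => // s.
by rewrite dotDl dotZl.
Qed.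

Lemma der_sqnorm (c v : 'rV[R]_d) (s0 : R) :
  is_derive s0 (1:R) (fun s : R => sqnorm (s *: v + c)) (2 * dot (s0 *: v + c) v).
Proof.
have H i : is_derive s0 (1:R) (fun s => (s *: v + c) ord0 i ^+ 2)
   ((2%:R * (s0 *: v + c) ord0 i ^+ 1) *: v ord0 i).
  exact: (is_deriveX 2 (der_coord c v i s0)).
apply: (is_derive_ext _ _ (der_sum H)) => //.
rewrite /dot mulr_sumr; apply: eq_bigr => i _.
by rewrite expr1 /GRing.scale /= mulrA.
Qed.
End S.


Section P.
Variables (R : realType) (d n : nat) (a : 'I_n -> 'rV[R]_d) (w : 'I_n -> R) (eps p : R).
Hypothesis eps_gt0 : 0 < eps.

Definition Sj (x : 'rV[R]_d) j := sqnorm (x - a j) + eps.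
Lemma Sj_gt0 x j : 0 < Sj x j.
Proof. by rewrite /Sj sqnormE ltr_wpDl // dot_ge0. Qed.
Definition gvec (x : 'rV[R]_d) := \sum_j mu a w eps p x j *: (x - a j).
Definition nuw (x : 'rV[R]_d) j := w j * powR (Sj x j) (p/2 - 2).
Definition B (z v u : 'rV[R]_d) := \sum_j (mu a w eps p z j * dot v u
   + (p-2) * (nuw z j * (dot (z - a j) v * dot (z - a j) u))).

Lemma der_addc (f : R -> R) (df c s0 : R) : is_derive s0 (1:R) f df ->
  is_derive s0 (1:R) (fun s => f s + c) df.
Proof.
move=> H; apply: (is_derive_ext _ _ (is_deriveD H (is_derive_cst c s0 1))) => //.
by rewrite addr0.
Qed.

Lemma der_scal (f : R -> R) (df k s0 : R) : is_derive s0 (1:R) f df ->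
  is_derive s0 (1:R) (fun s => k * f s) (k * df).
Proof.
move=> H; apply: (is_derive_ext _ _ (der_mul (is_derive_cst k s0 1) H)) => //.
by rewrite mulr0 addr0.
Qed.

Lemma der_Sj (y v : 'rV[R]_d) j (s0 : R) :
  is_derive s0 (1:R) (fun s => Sj (s *: v + y) j) (2 * dot (s0 *: v + y - a j) v).
Proof.
have := der_addc eps (der_sqnorm (y - a j) v s0).
apply: is_derive_ext => [s|]; by rewrite /Sj addrA.
Qed.

Lemma gvec_dot z u : dot (gvec z) u = \sum_j mu a w eps p z j * dot (z - a j) u.
Proof. by rewrite /gvec dot_suml; apply: eq_bigr => j _; rewrite dotZl. Qed.

Lemma der_Phi (y v : 'rV[R]_d) (s0 : R) :
  is_derive s0 (1:R) (fun s => Phi a w eps p (s *: v + y))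
    (p * dot (gvec (s0 *: v + y)) v).
Proof.
have H j := der_scal (w j) (@der_powR R (fun s => Sj (s *: v + y) j) _ (p/2) s0 (Sj_gt0 (s0 *: v + y) j) (der_Sj y v j s0)).
apply: (is_derive_ext _ _ (der_sum H)) => //.
rewrite gvec_dot mulr_sumr; apply: eq_bigr => j _.
by rewrite /mu /Sj; field.
Qed.

Lemma der_phi (y v u : 'rV[R]_d) (s0 : R) :
  is_derive s0 (1:R) (fun s => dot (gvec (s *: v + y)) u) (B (s0 *: v + y) v u).
Proof.
have H j := der_mul
   (der_scal (w j) (@der_powR R (fun s => Sj (s *: v + y) j) _ (p/2 - 1) s0 (Sj_gt0 (s0 *: v + y) j) (der_Sj y v j s0)))
   (der_dot (y - a j) v u s0).
apply: (is_derive_ext _ _ (der_sum H)).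
  by move=> s; rewrite gvec_dot; apply: eq_bigr => j _; rewrite /mu /Sj addrA.
rewrite /B; apply: eq_bigr => j _.
have -> : p / 2 - 1 - 1 = p / 2 - 2 by ring.
by rewrite /mu /nuw /Sj addrA; field.
Qed.
End P.


Lemma derive_line (R : realType) d (f : 'rV[R]_d -> R) x v :
  'D_v f x = 'D_1 (fun h : R => f (h *: v + x)) 0.
Proof.
rewrite /derive.
apply: congr1; apply: (congr1 (fun g : R -> R => g @ 0^')); apply/funext => h /=.
by rewrite addr0 scale0r add0r [_%:A]mulr1.
Qed.

Lemma dot_e (R : realType) d (x : 'rV[R]_d) k : dot x (@basis_vec R _ k) = x ord0 k.
Proof.
rewrite /dot (bigD1 k) //= big1 ?addr0; first by rewrite /basis_vec mxE !eqxx mulr1.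
by move=> i ik; rewrite /basis_vec mxE (negbTE ik) andbF mulr0.
Qed.

Section P.
Variables (R : realType) (d n : nat) (a : 'I_n -> 'rV[R]_d) (w : 'I_n -> R) (eps p : R).
Hypothesis eps_gt0 : 0 < eps.

Lemma DPhi k : 'D_(@basis_vec R _ k) (Phi a w eps p) =
   (fun y => p * dot (gvec a w eps p y) (@basis_vec R _ k)).
Proof.
apply/funext => y; rewrite derive_line.
by have [_ ->] := der_Phi a w p eps_gt0 y (@basis_vec R _ k) 0; rewrite scale0r add0r.
Qed.

Lemma hessian_entry xs i k : hessian (Phi a w eps p) xs i k =
  p * B a w eps p xs (@basis_vec R _ i) (@basis_vec R _ k).
Proof.
rewrite /hessian mxE DPhi derive_line.
have H := der_scal p (der_phi a w p eps_gt0 xs (@basis_vec R _ i) (@basis_vec R _ k) 0).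
have [_ ->] := H.
by rewrite scale0r add0r.
Qed.

Local Notation e := (@basis_vec R d).

Lemma L1 (v u : 'rV[R]_d) :
  \sum_i \sum_k v ord0 i * u ord0 k * dot (e i) (e k) = dot v u.
Proof.
transitivity (\sum_i v ord0 i * dot (e i) u).
  apply: eq_bigr => i _.
  rewrite (eq_bigr (fun k => v ord0 i * u ord0 k * (e i) ord0 k)); last by move=> k _; rewrite dot_e.
  by rewrite /dot mulr_sumr; apply: eq_bigr => k _; ring.
by apply: eq_bigr => i _; rewrite dotC dot_e.
Qed.

Lemma L2 (c v u : 'rV[R]_d) :
  \sum_i \sum_k v ord0 i * u ord0 k * (dot c (e i) * dot c (e k)) = dot c v * dot c u.
Proof.
transitivity (\sum_i \sum_k v ord0 i * u ord0 k * (c ord0 i * c ord0 k)).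
  by apply: eq_bigr => i _; apply: eq_bigr => k _; rewrite !dot_e.
rewrite /dot big_distrlr /=; apply: eq_bigr => i _; apply: eq_bigr => k _; ring.
Qed.

Lemma B_expand z v u : B a w eps p z v u =
  \sum_i \sum_k v ord0 i * u ord0 k * B a w eps p z (e i) (e k).
Proof.
rewrite /B; symmetry.
set T := fun (j : 'I_n) (i k : 'I_d) => (mu a w eps p z j * dot (e i) (e k) +
   (p - 2) * (nuw a w eps p z j * (dot (z - a j) (e i) * dot (z - a j) (e k)))).
transitivity (\sum_i \sum_k \sum_j v ord0 i * u ord0 k * T j i k).
  by apply: eq_bigr => i _; apply: eq_bigr => k _; rewrite mulr_sumr.
transitivity (\sum_i \sum_j \sum_k v ord0 i * u ord0 k * T j i k).
  by apply: eq_bigr => i _; rewrite exchange_big.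
rewrite exchange_big; symmetry; apply: eq_bigr => j _ /=; rewrite /T.
rewrite -(L1 v u) -(L2 (z - a j) v u) !mulr_sumr -big_split; apply: eq_bigr => i _.
rewrite !mulr_sumr -big_split; apply: eq_bigr => k _ /=; ring.
Qed.

Lemma quad_mx (v : 'rV[R]_d) (H : 'M[R]_d) :
  (v *m H *m v^T) ord0 ord0 = \sum_i \sum_k v ord0 i * v ord0 k * H i k.
Proof.
rewrite mxE.
transitivity (\sum_k \sum_i v ord0 i * H i k * v ord0 k).
  by apply: eq_bigr => k _; rewrite !mxE mulr_suml.
rewrite exchange_big /=; apply: eq_bigr => i _; apply: eq_bigr => k _ /=; ring.
Qed.

Lemma posdef_B xs : posdef (hessian (Phi a w eps p) xs) ->
  forall v, v != 0 -> 0 < p * B a w eps p xs v v.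
Proof.
move=> H v v0; have := H v v0; rewrite quad_mx B_expand mulr_sumr.
congr (0 < _); apply: eq_bigr => i _; rewrite mulr_sumr; apply: eq_bigr => k _.
rewrite hessian_entry; ring.
Qed.
End P.


Lemma concave_pow (R : realType) (s s' q : R) : 0 < s -> 0 < s' -> 0 < q -> q < 1 ->
  powR s' q <= powR s q + q * powR s (q - 1) * (s' - s).
Proof.
move=> s0 s'0 q0 q1.
have q1' : 0 < 1 - q by rewrite subr_gt0.
have := @conjugate_powR R (powR s' q) (powR s (1 - q)) q^-1 (1 - q)^-1
  (powR_ge0 _ _) (powR_ge0 _ _) (eqbRL (invr_gt0 _) q0) (eqbRL (invr_gt0 _) q1').
rewrite !invrK addrC subrK => /(_ erefl).
rewrite -!powRrM (mulfV (lt0r_neq0 q0)) (mulfV (lt0r_neq0 q1')) !powRr1 ?(ltW s0) ?(ltW s'0) // => H.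
have hp : 0 < powR s (q - 1) by rewrite powR_gt0.
have E : powR s' q = (powR s' q * powR s (1 - q)) * powR s (q - 1).
  rewrite -mulrA -powRD; last by rewrite (lt0r_neq0 s0) implybT.
  have -> : 1 - q + (q - 1) = 0 by ring.
  by rewrite powRr0 mulr1.
rewrite E; apply: le_trans (ler_wpM2r (ltW hp) H) _.
have e : s * powR s (q - 1) = powR s q by rewrite mulr_powRB1 // ltW.
rewrite -e le_eqVlt; apply/orP; left; apply/eqP; ring.
Qed.

Lemma half_lt1 (R : realType) (p : R) : p < 1 -> p / 2 < 1.
Proof.
move=> h; rewrite -subr_gt0; have -> : 1 - p / 2 = (2 - p) / 2 by field.
by apply: divr_gt0 => //; lra.
Qed.

Section MM.
Variables (R : realType) (d n : nat) (a : 'I_n -> 'rV[R]_d) (w : 'I_n -> R) (eps p : R).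
Hypothesis eps_gt0 : 0 < eps.
Hypothesis w_gt0 : forall j, 0 < w j.
Hypothesis p_gt0 : 0 < p.
Hypothesis p_lt1 : p < 1.
Hypothesis n_gt0 : (0 < n)%N.

Definition Msum x := \sum_j mu a w eps p x j.

Lemma mu_gt0 x j : 0 < mu a w eps p x j.
Proof. exact: mulr_gt0 (w_gt0 j) (powR_gt0 _ (Sj_gt0 a eps_gt0 x j)). Qed.

Lemma Msum_gt0 x : 0 < Msum x.
Proof.
rewrite /Msum (bigD1 (Ordinal n_gt0)) //=.
apply: (@lt_le_trans _ _ (mu a w eps p x (Ordinal n_gt0))); first exact: mu_gt0.
by rewrite lerDl sumr_ge0 // => j _; rewrite ltW ?mu_gt0.
Qed.

Lemma dotZr (k : R) (u x : 'rV[R]_d) : dot x (k *: u) = k * dot x u.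
Proof. by rewrite dotC dotZl dotC. Qed.
Lemma dotNr (u x : 'rV[R]_d) : dot x (- u) = - dot x u.
Proof. by rewrite dotC dotNl dotC. Qed.
Lemma dotDr (u v x : 'rV[R]_d) : dot x (u + v) = dot x u + dot x v.
Proof. by rewrite dotC dotDl !(dotC x). Qed.

Lemma sqnormD (c e : 'rV[R]_d) : sqnorm (c + e) = sqnorm c + 2 * dot c e + sqnorm e.
Proof. by rewrite !sqnormE dotDl !dotDr (dotC e c); ring. Qed.

Lemma step_eq x : irls_step a w eps p x = x - (Msum x)^-1 *: gvec a w eps p x.
Proof.
have -> : gvec a w eps p x = Msum x *: x - \sum_j (mu a w eps p x j *: a j).
  rewrite /gvec /Msum scaler_suml -sumrB; apply: eq_bigr => j _; exact: scalerBr.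
rewrite scalerBr scalerA mulVf ?lt0r_neq0 ?Msum_gt0 // scale1r opprB addrC subrK.
by [].
Qed.

Lemma MM x : Phi a w eps p (irls_step a w eps p x) <=
  Phi a w eps p x - p / 2 * (sqnorm (gvec a w eps p x) / Msum x).
Proof.
set y := irls_step a w eps p x; set g := gvec a w eps p x; set M := Msum x.
set del := - (M^-1 *: g).
have Mg0 : 0 < M by exact: Msum_gt0.
have q0 : 0 < p / 2 by rewrite divr_gt0.
have q1 : p / 2 < 1 by exact: half_lt1.
apply: (@le_trans _ _ (\sum_j w j * (powR (Sj a eps x j) (p/2) + p/2 * powR (Sj a eps x j) (p/2 - 1) * (Sj a eps y j - Sj a eps x j)))).
  apply: ler_sum => j _; apply: ler_wpM2l; first exact: ltW (w_gt0 j).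
  exact: concave_pow (Sj_gt0 a eps_gt0 x j) (Sj_gt0 a eps_gt0 y j) q0 q1.
have Sdiff j : Sj a eps y j - Sj a eps x j = 2 * dot (x - a j) del + sqnorm del.
  rewrite /Sj /y step_eq -/M -/g.
  have -> : x - M^-1 *: g - a j = (x - a j) + del by rewrite /del; rewrite addrAC.
  rewrite sqnormD; ring.
under eq_bigr => j _ do rewrite Sdiff.
have -> : \sum_j w j * (powR (Sj a eps x j) (p/2) + p/2 * powR (Sj a eps x j) (p/2 - 1) * (2 * dot (x - a j) del + sqnorm del))
   = Phi a w eps p x + p/2 * (2 * dot g del + M * sqnorm del).
  rewrite /Phi /g gvec_dot /M /Msum mulr_suml [2 * \sum_j _]mulr_sumr -big_split /= mulr_sumr -big_split /=.
  by apply: eq_bigr => j _; rewrite /mu /Sj; ring.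
have -> : dot g del = - M^-1 * sqnorm g.
  by rewrite /del dotNr dotZr sqnormE mulNr.
have -> : sqnorm del = M^-1 * M^-1 * sqnorm g.
  by rewrite /del !sqnormE dotNl dotNr dotZl dotZr opprK mulrA.
rewrite le_eqVlt; apply/orP; left; apply/eqP; field.
by rewrite lt0r_neq0.
Qed.
End MM.


Section Cont.
Variables (R : realType) (d : nat).
Implicit Types (f g : 'rV[R]_d -> R) (z : 'rV[R]_d).

Lemma ct_add f g (z0 : 'rV[R]_d) : {for z0, continuous f} -> {for z0, continuous g} ->
  {for z0, continuous (fun z => f z + g z)}.
Proof. exact: continuousD. Qed.

Lemma ct_mul f g (z0 : 'rV[R]_d) : {for z0, continuous f} -> {for z0, continuous g} ->
  {for z0, continuous (fun z => f z * g z)}.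
Proof. exact: continuousM. Qed.

Lemma ct_cst (c : R) (z0 : 'rV[R]_d) : {for z0, continuous (fun _ : 'rV[R]_d => c)}.
Proof. exact: cst_continuous. Qed.

Lemma ct_sum m (F : 'I_m -> 'rV[R]_d -> R) (z0 : 'rV[R]_d) :
  (forall i, {for z0, continuous (F i)}) ->
  {for z0, continuous (fun z => \sum_i F i z)}.
Proof.
move=> H; apply: cvg_big; [exact: add_continuous|exact: nbhs_filter|move=> i _].
exact: H.
Qed.

Lemma ct_coord (c : 'rV[R]_d) i (z0 : 'rV[R]_d) : {for z0, continuous (fun z => (z - c) ord0 i)}.
Proof.
have -> : (fun z : 'rV[R]_d => (z - c) ord0 i) = (fun z => z ord0 i + - c ord0 i).
  by apply/funext => z; rewrite !mxE.
apply: ct_add; last exact: ct_cst.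
exact: coord_continuous.
Qed.

Lemma ct_powR f (r : R) (z0 : 'rV[R]_d) : 0 < f z0 -> {for z0, continuous f} ->
  {for z0, continuous (fun z => powR (f z) r)}.
Proof.
move=> fp cf.
have cp : {for f z0, continuous (fun x : R => powR x r)}.
  apply: differentiable_continuous; apply/derivable1_diffP.
  by apply: derivable_powR; rewrite in_itv /= fp.
exact: (continuous_comp cf cp).
Qed.
End Cont.

Section Data.
Variables (R : realType) (d n : nat) (a : 'I_n -> 'rV[R]_d) (w : 'I_n -> R) (eps p : R).
Hypothesis eps_gt0 : 0 < eps.
Local Notation e := (@basis_vec R d).
Local Notation BB := (B a w eps p).

Lemma ct_dot (c u : 'rV[R]_d) (z0 : 'rV[R]_d) : {for z0, continuous (fun z : 'rV[R]_d => dot (z - c) u)}.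
Proof.
apply: ct_sum => i; apply: ct_mul; [exact: ct_coord|exact: ct_cst].
Qed.

Lemma ct_sqnorm (c : 'rV[R]_d) (z0 : 'rV[R]_d) : {for z0, continuous (fun z : 'rV[R]_d => sqnorm (z - c))}.
Proof.
have -> : (fun z : 'rV[R]_d => sqnorm (z - c)) = (fun z : 'rV[R]_d => dot (z - c) (z - c)).
  by apply/funext => z; rewrite sqnormE.
apply: ct_sum => i; apply: ct_mul; exact: ct_coord.
Qed.

Lemma ct_pw (r : R) j (z0 : 'rV[R]_d) : {for z0, continuous (fun z : 'rV[R]_d => w j * powR (Sj a eps z j) r)}.
Proof.
apply: ct_mul; first exact: ct_cst.
apply: ct_powR; first exact: Sj_gt0.
apply: ct_add; [exact: ct_sqnorm|exact: ct_cst].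
Qed.

Lemma ct_Bz (v u : 'rV[R]_d) (z0 : 'rV[R]_d) : {for z0, continuous (fun z : 'rV[R]_d => BB z v u)}.
Proof.
apply: ct_sum => j; apply: ct_add.
  apply: ct_mul; [exact: ct_pw|exact: ct_cst].
apply: ct_mul; first exact: ct_cst.
apply: ct_mul; first exact: ct_pw.
apply: ct_mul; exact: ct_dot.
Qed.

Lemma ct_Bv (xs v0 : 'rV[R]_d) : {for v0, continuous (fun v : 'rV[R]_d => BB xs v v)}.
Proof.
have -> : (fun v : 'rV[R]_d => BB xs v v) = (fun v : 'rV[R]_d => \sum_j (mu a w eps p xs j * sqnorm (v - 0)
   + (p-2) * (nuw a w eps p xs j * (dot (v - 0) (xs - a j) * dot (v - 0) (xs - a j))))).
  by apply/funext => v; rewrite /B subr0; apply: eq_bigr => j _; rewrite (dotC v (xs - a j)) sqnormE.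
apply: ct_sum => j; apply: ct_add.
  apply: ct_mul; [exact: ct_cst|exact: ct_sqnorm].
apply: ct_mul; first exact: ct_cst.
apply: ct_mul; first exact: ct_cst.
apply: ct_mul; exact: ct_dot.
Qed.

Lemma ct_sq (v0 : 'rV[R]_d) : {for v0, continuous (fun v : 'rV[R]_d => sqnorm v)}.
Proof.
have -> : (fun v : 'rV[R]_d => sqnorm v) = (fun v : 'rV[R]_d => sqnorm (v - 0)).
  by apply/funext => v; rewrite subr0.
exact: ct_sqnorm.
Qed.
End Data.


Lemma coord_bound (R : realType) d (v : 'rV[R]_d) i : sqnorm v = 1 -> -1 <= v ord0 i <= 1.
Proof.
move=> h.
have : v ord0 i ^+ 2 <= 1.
  rewrite -h /sqnorm (bigD1 i) //= lerDl sumr_ge0 // => k _; exact: sqr_ge0.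
move=> H; apply/andP; split; nra.
Qed.

Lemma sqnorm_e (R : realType) d (k : 'I_d) : sqnorm (@basis_vec R d k) = 1.
Proof. by rewrite sqnormE dot_e /basis_vec mxE !eqxx. Qed.

Lemma sqnorm0 (R : realType) d : sqnorm (0 : 'rV[R]_d) = 0.
Proof. by rewrite /sqnorm big1 // => i _; rewrite mxE expr0n. Qed.

Section Lam.
Variables (R : realType) (d n : nat) (a : 'I_n -> 'rV[R]_d) (w : 'I_n -> R) (eps p : R).
Hypothesis eps_gt0 : 0 < eps.
Local Notation e := (@basis_vec R d).
Local Notation BB := (B a w eps p).

Lemma q0_exists xs : (0 < d)%N -> (forall v, v != 0 -> 0 < BB xs v v) ->
  exists2 q0, 0 < q0 & forall v, sqnorm v = 1 -> q0 <= BB xs v v.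
Proof.
move=> d0 Hpos.
pose S := (fun v : 'rV[R]_d => sqnorm v) @^-1` [set x | x = 1].
have S0 : S !=set0 by exists (e (Ordinal d0)); rewrite /S /= sqnorm_e.
have cube : compact [set v : 'rV[R]_d | forall i, `[(-1 : R), 1]%classic (v ord0 i)].
  apply: (@rV_compact _ _ (fun=> `[(-1 : R), 1]%classic)).
  by move=> _; apply: segment_compact.
have cS : compact S.
  apply: (subclosed_compact _ cube).
    apply: preimage_closed; last exact: closed_eq.
    by move=> x _; exact: ct_sq.
  move=> v; rewrite /S /= => h i; rewrite /= in_itv /=.
  exact: coord_bound.
have cont : {within S, continuous (fun v => BB xs v v)}.
  by apply: continuous_subspaceT => v; exact: ct_Bv.
have [c cS' cmin] := compact_EVT_min S0 cS cont.
exists (BB xs c c).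
  apply: Hpos; apply/negP => /eqP c0.
  by move: cS'; rewrite inE /S /= c0 sqnorm0 => /esym/eqP; rewrite oner_eq0.
by move=> v hv; apply: cmin; rewrite inE.
Qed.

Lemma BZ z k v : BB z (k *: v) (k *: v) = k ^+ 2 * BB z v v.
Proof.
rewrite /B mulr_sumr; apply: eq_bigr => j _.
rewrite dotZl !dotZr; ring.
Qed.

Lemma B0 z : BB z 0 0 = 0.
Proof. by have := BZ z 0 0; rewrite scale0r expr0n /= mul0r. Qed.

Lemma ct_norm (f : 'rV[R]_d -> R) (z0 : 'rV[R]_d) : {for z0, continuous f} ->
  {for z0, continuous (fun z => `|f z|)}.
Proof. by move=> cf; apply: (continuous_comp cf); exact: norm_continuous. Qed.

Lemma unif xs q0 : 0 < q0 -> (forall v, sqnorm v = 1 -> q0 <= BB xs v v) ->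
  exists2 r, 0 < r & forall z, ball xs r z -> forall u, q0 / 2 * sqnorm u <= BB z u u.
Proof.
move=> q0p Hq.
pose D z := \sum_i \sum_k `|BB z (e i) (e k) - BB xs (e i) (e k)|.
have Dc : {for xs, continuous D}.
  apply: ct_sum => i; apply: ct_sum => k; apply: ct_norm.
  apply: ct_add; [exact: ct_Bz|exact: ct_cst].
have D0 : D xs = 0.
  by rewrite /D big1 // => i _; rewrite big1 // => k _; rewrite subrr normr0.
have q2 : 0 < q0 / 2 by rewrite divr_gt0.
have : \forall z \near xs, D z < q0 / 2.
  have H := cvgr_lt _ Dc; rewrite D0 in H; exact: H.
case/nbhs_ballP => r r0 Hr; exists r => // z zr u.
have Dz : D z < q0 / 2 by exact: Hr.
have key v : sqnorm v = 1 -> q0 / 2 <= BB z v v.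
  move=> hv.
  have E : BB z v v - BB xs v v =
    \sum_i \sum_k v ord0 i * v ord0 k * (BB z (e i) (e k) - BB xs (e i) (e k)).
    rewrite (B_expand a w eps p z) (B_expand a w eps p xs) -sumrB.
    apply: eq_bigr => i _; rewrite -sumrB; apply: eq_bigr => k _; ring.
  have : `|BB z v v - BB xs v v| <= D z.
    rewrite E; apply: (le_trans (ler_norm_sum _ _ _)); apply: ler_sum => i _.
    apply: (le_trans (ler_norm_sum _ _ _)); apply: ler_sum => k _.
    rewrite !normrM -[X in _ <= X]mul1r; apply: ler_wpM2r => //.
    have /andP[h1 h2] := coord_bound i hv; have /andP[h3 h4] := coord_bound k hv.
    rewrite -[1]mul1r; apply: ler_pM => //; by rewrite ler_norml ?h1 ?h2 ?h3 ?h4.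
  have := Hq v hv.
  move=> h1 h2; have h3 := le_lt_trans h2 Dz.
  rewrite ltr_norml in h3; case/andP: h3 => h3 _.
  have : q0 - q0 / 2 = q0 / 2 by field.
  lra.
have [->|u0] := eqVneq u 0; first by rewrite sqnorm0 B0 mulr0.
have sp : 0 < sqnorm u.
  rewrite lt_neqAle sqnormE dot_ge0 andbT; apply/negP => /eqP/esym h.
  move/negP: u0; apply; apply/eqP/rowP => i; rewrite mxE.
  have : u ord0 i ^+ 2 <= 0.
    rewrite -h /dot (bigD1 i) //= expr2 lerDl sumr_ge0 // => k _.
    by rewrite -expr2 sqr_ge0.
  by move=> H; apply/eqP; rewrite -sqrf_eq0 eq_le H sqr_ge0.
set s := Num.sqrt (sqnorm u).
have s0 : 0 < s by rewrite sqrtr_gt0.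
have us : u = s *: (s^-1 *: u) by rewrite scalerA divff ?gt_eqF // scale1r.
have hv : sqnorm (s^-1 *: u) = 1.
  rewrite sqnormE dotZl dotZr -sqnormE mulrA -expr2 exprVn sqr_sqrtr ?ltW //.
  by rewrite mulVf ?gt_eqF.
rewrite us BZ.
have -> : sqnorm (s *: (s^-1 *: u)) = s ^+ 2 by rewrite sqnormE dotZl dotZr -sqnormE hv; ring.
have := key _ hv; have := sqr_ge0 s; nra.
Qed.
End Lam.


Lemma powR_neg_le (R : realType) (s t r : R) : 0 < s -> s <= t -> r <= 0 ->
  powR t r <= powR s r.
Proof.
move=> s0 st r0.
have t0 : 0 < t := lt_le_trans s0 st.
have h1 : powR s (- r) <= powR t (- r).
  apply: (@ge0_ler_powR R (- r)) => //; rewrite ?nnegrE ?oppr_ge0 //; exact: ltW.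
have h2 : 0 < powR s (- r) by rewrite powR_gt0.
have e1 : powR t r = (powR t (- r))^-1 by rewrite powRN invrK.
have e2 : powR s r = (powR s (- r))^-1 by rewrite powRN invrK.
rewrite e1 e2 lef_pV2 ?posrE ?powR_gt0 //.
Qed.

Section Main.
Variables (R : realType) (d n : nat) (a : 'I_n -> 'rV[R]_d) (w : 'I_n -> R) (eps p : R).
Hypothesis eps_gt0 : 0 < eps.
Hypothesis w_gt0 : forall j, 0 < w j.
Hypothesis p_gt0 : 0 < p.
Hypothesis p_lt1 : p < 1.
Local Notation e := (@basis_vec R d).
Local Notation BB := (B a w eps p).
Local Notation g := (gvec a w eps p).
Local Notation F := (Phi a w eps p).

Definition Mmax := \sum_j w j * powR eps (p / 2 - 1).

Lemma Msum_le x : Msum a w eps p x <= Mmax.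
Proof.
apply: ler_sum => j _; apply: ler_wpM2l; first exact: ltW.
apply: powR_neg_le => //; first by rewrite lerDr sqnormE dot_ge0.
have := half_lt1 p_lt1; lra.
Qed.

Lemma grad0 xs : local_minimizer F xs -> g xs = 0.
Proof.
move=> lm; apply/rowP => k; rewrite mxE.
pose f := fun s : R => s *: e k + xs.
have fc : f @ (0 : R) --> xs.
  have -> : xs = f 0 by rewrite /f scale0r add0r.
  apply: cvgD; last exact: cvg_cst.
  exact: scalel_continuous.
have := fc _ lm; case/nbhs_ballP => del del0 Hd.
have mn : forall t, t \in `](- del), del[%R -> F (f 0) <= F (f t).
  move=> t; rewrite in_itv /= => /andP[h1 h2].
  rewrite /f scale0r add0r; apply: Hd.
  rewrite -ball_normE /ball_ /= sub0r normrN ltr_norml h1 h2 //.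
have del0' : 0 < del by [].
have dle : - del <= del by lra.
have c0 : (0:R) \in `](- del), del[%R by rewrite in_itv /= oppr_lt0 del0'.
have dv : forall t, t \in `](- del), del[%R -> derivable (fun t => F (f t)) t 1.
  by move=> t _; case: (der_Phi a w p eps_gt0 xs (e k) t).
have dz := derive1_at_min dle dv c0 mn.
have [_ E1] := dz.
have [_ E2] := der_Phi a w p eps_gt0 xs (e k) 0.
rewrite /f in E1; rewrite E1 scale0r add0r dot_e in E2.
by move/esym/eqP: E2; rewrite mulf_eq0 (gt_eqF p_gt0) /= => /eqP.
Qed.

Lemma dot0l (x : 'rV[R]_d) : dot 0 x = 0.
Proof. by rewrite /dot big1 // => i _; rewrite mxE mul0r. Qed.

Lemma amgm_gen (G U : 'rV[R]_d) (lam : R) :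
  0 <= sqnorm G - 2 * lam * dot G U + lam ^+ 2 * sqnorm U.
Proof.
have := sqnormE (G - lam *: U); rewrite dotDl !dotDr !dotNl !dotNr !dotZl !dotZr.
rewrite (dotC U G) -!sqnormE => E.
have : 0 <= sqnorm (G - lam *: U) by rewrite sqnormE dot_ge0.
rewrite E; move=> H; apply: le_trans H _; rewrite le_eqVlt; apply/orP; left; apply/eqP; ring.
Qed.

Lemma PL xs r lam : 0 < lam -> g xs = 0 ->
  (forall z, ball xs r z -> forall u, lam * sqnorm u <= BB z u u) ->
  forall x, ball xs r x -> lam * (F x - F xs) <= p * sqnorm (g x).
Proof.
move=> lam0 g0 HB x hx.
set u := x - xs.
have seg : forall s, 0 <= s <= 1 -> ball xs r (s *: u + xs).
  move=> s /andP[s0 s1]; move: hx; rewrite -ball_normE /ball_ /= => hx.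
  have -> : xs - (s *: u + xs) = - (s *: u) by rewrite opprD addrCA subrr addr0.
  rewrite normrN normrZ; apply: le_lt_trans hx.
  rewrite /u distrC -[X in _ <= X]mul1r; apply: ler_wpM2r => //.
  by rewrite ger0_norm.
have hB : forall s, 0 <= s <= 1 -> lam * sqnorm u <= BB (s *: u + xs) u u.
  by move=> s hs; apply: HB; exact: seg.
pose phi := fun s : R => dot (g (s *: u + xs)) u.
have dphi : forall s, is_derive s (1:R) phi (BB (s *: u + xs) u u).
  move=> s; have := der_phi a w p eps_gt0 xs u u s; exact.
have cphi : forall a0 b0 : R, {within `[a0, b0], continuous phi}.
  move=> a0 b0; apply: derivable_within_continuous => s _.
  by case: (dphi s).
have phi0 : phi 0 = 0 by rewrite /phi scale0r add0r g0 dot0l.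
have phi1 : phi 1 = dot (g x) u by rewrite /phi scale1r /u subrK.
have [c c01 Hc] := MVT_segment ler01 (fun s _ => dphi s) (cphi 0 1).
have G1 : lam * sqnorm u <= dot (g x) u.
  rewrite -phi1 -[phi 1]subr0 -phi0 Hc subr0 mulr1; apply: hB.
  by move: c01; rewrite in_itv.
have phile : forall c, 0 <= c <= 1 -> phi c <= phi 1.
  move=> c1 /andP[c10 c11].
  have [c' c'01 Hc'] := MVT_segment c11 (fun s _ => dphi s) (cphi c1 1).
  rewrite -subr_ge0 Hc'; apply: mulr_ge0; last by rewrite subr_ge0.
  apply: le_trans (hB c' _); first by apply: mulr_ge0; [exact: ltW|rewrite sqnormE dot_ge0].
  move: c'01; rewrite in_itv /= => /andP[h1 h2]; rewrite h2 andbT.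
  exact: le_trans h1.
pose h := fun s : R => F (s *: u + xs).
have dh : forall s, is_derive s (1:R) h (p * phi s).
  move=> s; have := der_Phi a w p eps_gt0 xs u s; exact.
have ch : {within `[0, 1], continuous h}.
  apply: derivable_within_continuous => s _.
  by case: (dh s).
have [c2 c201 Hc2] := MVT_segment ler01 (fun s _ => dh s) ch.
have Fle : F x - F xs <= p * dot (g x) u.
  have -> : F x - F xs = h 1 - h 0 by rewrite /h scale1r /u subrK scale0r add0r.
  rewrite Hc2 subr0 mulr1 -phi1; apply: ler_wpM2l; first exact: ltW.
  by apply: phile; move: c201; rewrite in_itv.
have amgm := amgm_gen (g x) u lam.
have S0 : 0 <= sqnorm u by rewrite sqnormE dot_ge0.
have t1 : 0 <= lam * (dot (g x) u - lam * sqnorm u).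
  by apply: mulr_ge0; [exact: ltW|rewrite subr_ge0].
have h1 : lam * dot (g x) u <= sqnorm (g x).
  rewrite -subr_ge0.
  have -> : sqnorm (g x) - lam * dot (g x) u = (sqnorm (g x) - 2 * lam * dot (g x) u + lam ^+ 2 * sqnorm u) + lam * (dot (g x) u - lam * sqnorm u) by ring.
  exact: addr_ge0 amgm t1.
have t2 : 0 <= lam * (p * dot (g x) u - (F x - F xs)).
  by apply: mulr_ge0; [exact: ltW|rewrite subr_ge0].
have t3 : 0 <= p * (sqnorm (g x) - lam * dot (g x) u).
  by apply: mulr_ge0; [exact: ltW|rewrite subr_ge0].
rewrite -subr_ge0.
have -> : p * sqnorm (g x) - lam * (F x - F xs) = p * (sqnorm (g x) - lam * dot (g x) u) + lam * (p * dot (g x) u - (F x - F xs)) by ring.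
exact: addr_ge0 t3 t2.
Qed.
End Main.

End Helpers.
Import Helpers.

Theorem proposition7 (R : realType) (d n : nat)
  (a : 'I_n -> 'rV[R]_d) (w : 'I_n -> R) (eps p : R) (x0 xs : 'rV[R]_d) :
  (0 < d)%N -> (0 < n)%N ->
  (forall j, 0 < w j) -> 0 < eps -> 0 < p -> p < 1 ->
  irls_iter a w eps p x0 @ \oo --> xs ->
  local_minimizer (Phi a w eps p) xs ->
  posdef (hessian (Phi a w eps p) xs) ->
  exists nu : R, nu < 1 /\ exists T : nat, forall t : nat, (T <= t)%N ->
    Phi a w eps p (irls_iter a w eps p x0 t.+1) - Phi a w eps p xs
    <= nu * (Phi a w eps p (irls_iter a w eps p x0 t) - Phi a w eps p xs).
Proof.
move=> d0 n0 w0 eps0 p0 p1 conv lm pd.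
have Bpos : forall v, v != 0 -> 0 < B a w eps p xs v v.
  by move=> v v0; have := posdef_B (a:=a) (w:=w) eps0 pd v0; rewrite pmulr_rgt0.
have [q0 q0p Hq] := q0_exists d0 Bpos.
have [r r0 Hr] := unif eps0 q0p Hq.
have g0 := grad0 eps0 p0 lm.
have lam0 : 0 < q0 / 2 by rewrite divr_gt0.
have ev := conv _ (nbhsx_ballx xs r r0).
case: ev => N _ HN.
have Mm0 : 0 < Mmax w eps p.
  exact: lt_le_trans (Msum_gt0 a p eps0 w0 n0 x0) (Msum_le a eps0 w0 p1 x0).
have c0 : 0 < q0 / 2 / (2 * Mmax w eps p) by rewrite divr_gt0 // mulr_gt0.
exists (1 - q0 / 2 / (2 * Mmax w eps p)); split; first by lra.
exists N => t tN.
have -> : irls_iter a w eps p x0 t.+1 = irls_step a w eps p (irls_iter a w eps p x0 t) by [].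
set x := irls_iter a w eps p x0 t.
have hx : ball xs r x := HN t tN.
have pl := PL eps0 p0 lam0 g0 Hr hx.
have mm := MM a eps0 w0 p0 p1 n0 x.
have M0 := Msum_gt0 a p eps0 w0 n0 x.
have Ml := Msum_le a eps0 w0 p1 x.
set Gg := sqnorm (gvec a w eps p x) in pl mm *.
set M := Msum a w eps p x in mm M0 Ml *.
set Mm := Mmax w eps p in Ml Mm0 c0 *.
set D := Phi a w eps p x - Phi a w eps p xs in pl *.
have G0 : 0 <= Gg by rewrite /Gg sqnormE dot_ge0.
have A0 : 0 <= Gg / M by rewrite divr_ge0 // ltW.
have GA : Gg = Gg / M * M by rewrite mulfVK // gt_eqF.
have key : q0 / 2 * D <= p * (Gg / M) * Mm.
  apply: (le_trans pl); rewrite [X in p * X <= _]GA mulrA.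
  by apply: ler_wpM2l => //; rewrite mulr_ge0 // ltW.
have key2 : q0 / 2 / (2 * Mm) * D <= p / 2 * (Gg / M).
  have -> : q0 / 2 / (2 * Mm) * D = (q0 / 2 * D) / (2 * Mm) by ring.
  have -> : p / 2 * (Gg / M) = (p * (Gg / M) * Mm) / (2 * Mm).
    by field; rewrite !gt_eqF.
  by apply: ler_wpM2r => //; rewrite invr_ge0 ltW // mulr_gt0.
rewrite /D in key2 *; lra.
Qed.
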